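(* Let $A$ be an additive poset, $a\in A$, and $n\ge1$ an integer. There is a bijection between chains $a=a_0<a_1<\cdots<a_n$ in $A$ of length $n$ starting at $a$ and sequences $b_1,\dots,b_n$ of $n$ pairwise independent nonzero elements of $A^a$. It sends the chain to the sequence $b_i=a_{i-1}+a_i$ ($i=1,\dots,n$), and its inverse sends $b_1,\dots,b_n$ to the chain with $a_0=a$ and $a_i=a+b_1+\cdots+b_i$ ($i=1,\dots,n$).
   Context: An additive poset is a pair $(A,\le)$ where $A$ is an abelian group and $\le$ is a partial order on $A$ such that for all $a,b,c\in A$: $(\ast)$ if $b\le a$ and $c\le a$ then $b+c\le a$; $(\ast\ast)$ if $a\le b$ and $a\le c$ then $a\le a+b+c$. Elements $a,b$ are independent if $a\le a+b$ (a symmetric relation). $A^a$ denotes the set of elements of $A$ independent from $a$. We write $x<y$ if $x\le y$ and $x\ne y$; a chain of length $n$ is a sequence $a_0<a_1<\cdots<a_n$. *)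

(* Defs.v *)
From HB Require Import structures.
From mathcomp Require Import all_boot all_order all_algebra.
Set Implicit Arguments. Unset Strict Implicit. Unset Printing Implicit Defensive.
Import GRing.Theory.
Local Open Scope ring_scope.

Record additive_poset (A : zmodType) (le : A -> A -> Prop) : Prop := {
  ap_refl : forall x, le x x;
  ap_antisym : forall x y, le x y -> le y x -> x = y;
  ap_trans : forall x y z, le x y -> le y z -> le x z;
  ap_star : forall a b c, le b a -> le c a -> le (b + c) a;
  ap_starstar : forall a b c, le a b -> le a c -> le a (a + b + c)
}.

Definition ap_lt (A : zmodType) (le : A -> A -> Prop) (x y : A) : Prop :=
  le x y /\ x <> y.

Definition indep (A : zmodType) (le : A -> A -> Prop) (a b : A) : Prop :=
  le a (a + b).

Definition chain_from (A : zmodType) (le : A -> A -> Prop) (a : A) (n : nat)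
  (c : nat -> A) : Prop :=
  c 0%N = a /\ forall i : nat, (i < n)%N -> ap_lt le (c i) (c i.+1).

Definition indep_seq (A : zmodType) (le : A -> A -> Prop) (a : A) (n : nat)
  (b : nat -> A) : Prop :=
  (forall i : nat, (1 <= i <= n)%N -> b i <> 0 /\ indep le a (b i)) /\
  (forall i j : nat, (1 <= i <= n)%N -> (1 <= j <= n)%N -> i <> j ->
     indep le (b i) (b j)).

Definition chain_to_seq (A : zmodType) (c : nat -> A) : nat -> A :=
  fun i => c i.-1 + c i.

Definition seq_to_chain (A : zmodType) (a : A) (b : nat -> A) : nat -> A :=
  fun i => a + \sum_(1 <= j < i.+1) b j.

(* Main.v *)
Require Import Defs.
From mathcomp Require Import all_boot all_order all_algebra.
Set Implicit Arguments. Unset Strict Implicit.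
Import GRing.Theory.
Local Open Scope ring_scope.

Section H.
Variables (A : zmodType) (le : A -> A -> Prop) (HP : additive_poset le).

Lemma ch2 (x : A) : x + x = 0.
Proof.
have h1 : le (x + x) x := ap_star HP (ap_refl HP x) (ap_refl HP x).
have h2 : le x (x + x + x) := ap_starstar HP (ap_refl HP x) (ap_refl HP x).
have h3 : le (x + x + x) x by apply: (ap_star HP h1 (ap_refl HP x)).
have e := ap_antisym HP h3 h2.
apply: (@addIr _ x); by rewrite add0r.
Qed.

Lemma ch2K (x y : A) : x + (x + y) = y.
Proof. by rewrite addrA ch2 add0r. Qed.

Lemma indep_sym (x y : A) : indep le x y -> indep le y x.
Proof.
rewrite /indep => h.
have := ap_star HP h (ap_refl HP (x + y)).
by rewrite ch2K addrC.
Qed.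

Lemma indep_add (x y z : A) :
  indep le x y -> indep le x z -> indep le y z -> indep le (x + y) z.
Proof.
move=> hxy hxz hyz; rewrite /indep.
have h1 : le x (x + y + z).
  have := ap_starstar HP hxy hxz.
  by rewrite ch2K addrCA addrA.
have hyx := indep_sym hxy; rewrite /indep in hyx.
have h2 : le y (x + y + z).
  have := ap_starstar HP hyx hyz.
  by rewrite ch2K addrA.
exact (ap_star HP h1 h2).
Qed.
End H.

Theorem lemma4p3 (A : zmodType) (le : A -> A -> Prop) (a : A) (n : nat) :
  additive_poset le -> (1 <= n)%N ->
  (forall c : nat -> A, chain_from le a n c -> indep_seq le a n (chain_to_seq c)) /\
  (forall b : nat -> A, indep_seq le a n b -> chain_from le a n (seq_to_chain a b)) /\
  (forall c : nat -> A, chain_from le a n c ->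
     forall i : nat, (i <= n)%N -> seq_to_chain a (chain_to_seq c) i = c i) /\
  (forall b : nat -> A, indep_seq le a n b ->
     forall i : nat, (1 <= i <= n)%N -> chain_to_seq (seq_to_chain a b) i = b i).
Proof.
move=> HP n1; split; [|split; [|split]].
- move=> c [c0 hc].
  have mono : forall k d, (k + d <= n)%N -> le (c k) (c (k + d)%N).
    move=> k; elim=> [|d IH] hd; first by rewrite addn0; exact (ap_refl HP _).
    refine (ap_trans HP (IH _) _); first by apply: ltnW; rewrite -addnS.
    by rewrite addnS; case: (hc (k + d)%N _); first by rewrite -addnS.
  have mono2 : forall k l, (k <= l <= n)%N -> le (c k) (c l).
    move=> k l /andP[hkl hln]; rewrite -(subnKC hkl); apply: mono.
    by rewrite subnKC.
  split.
  + move=> i /andP[i1 iN]; split.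
      rewrite /chain_to_seq => e.
      have ilt : (i.-1 < n)%N by rewrite prednK.
      have [_ ne] := hc i.-1 ilt.
      apply: ne; rewrite prednK //.
      by rewrite -[c i]add0r -e -addrA (ch2 HP) addr0.
    rewrite /indep /chain_to_seq addrA -c0; refine (ap_starstar HP _ _).
      by apply: mono2; rewrite leq0n /= (leq_trans (leq_pred _) iN).
    by apply: mono2; rewrite leq0n.
  + have key : forall i j, (1 <= i)%N -> (i < j)%N -> (j <= n)%N ->
       indep le (chain_to_seq c i) (chain_to_seq c j).
      move=> i j i1 ij jn; rewrite /indep /chain_to_seq addrA.
      have hij : (i <= j.-1)%N by rewrite -ltnS prednK // (leq_trans _ ij).
      have jn' : (j.-1 <= n)%N by rewrite (leq_trans (leq_pred _) jn).
      refine (ap_starstar HP (ap_star HP _ _) (ap_star HP _ _)); apply: mono2.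
      * by rewrite (leq_trans (leq_pred _) hij).
      * by rewrite hij.
      * by rewrite (leq_trans (leq_pred _) (leq_trans hij (leq_pred _))) jn.
      * by rewrite (leq_trans hij (leq_pred _)) jn.
    move=> i j /andP[i1 iN] /andP[j1 jN] ne.
    case: (ltngtP i j) => h.
    * by apply: key.
    * by apply: (indep_sym HP); apply: key.
    * by case: ne.
- move=> b [hb hpair].
  have S0 : seq_to_chain a b 0 = a by rewrite /seq_to_chain big_geq // addr0.
  have SS : forall i, seq_to_chain a b i.+1 = seq_to_chain a b i + b i.+1.
    by move=> i; rewrite /seq_to_chain big_nat_recr //= addrA.
  have P : forall i, (i <= n)%N -> forall j, (i < j <= n)%N ->
       indep le (seq_to_chain a b i) (b j).
    elim=> [|i IH] iN j /andP[ij jN].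
      by rewrite S0; case: (hb j _) => //; rewrite ij jN.
    rewrite SS; refine (indep_add HP _ _ _).
    + apply: IH; first exact: ltnW.
      by rewrite ltnSn.
    + apply: IH; first exact: ltnW.
      by rewrite (ltn_trans (ltnSn i) ij).
    + apply: hpair.
      * by rewrite iN.
      * by rewrite jN andbT (leq_trans _ ij).
      * by move=> e; rewrite e ltnn in ij.
  split => // i iN; split.
    rewrite SS; apply: P; first exact: ltnW.
    by rewrite ltnSn.
  rewrite SS => e.
  case: (hb i.+1 _); first by rewrite iN.
  move=> hne _; apply: hne.
  by apply: (addrI (seq_to_chain a b i)); rewrite addr0 -e.
- move=> c [c0 hc] i _.
  elim: i => [|i IH]; first by rewrite /seq_to_chain big_geq // addr0.
  rewrite /seq_to_chain big_nat_recr //= addrA.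
  rewrite /seq_to_chain in IH; rewrite IH /chain_to_seq /= addrA.
  by rewrite (ch2 HP) add0r.
- move=> b hb [|i] // _.
  rewrite /chain_to_seq /= /seq_to_chain (big_nat_recr i.+1) //=.
  by rewrite (addrA a _ (b _)) (ch2K HP).
Qed.
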